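(* There is no correct translation from SYNCSIMPLE into $\mathrm{LOCKSIMPLE}_{1,IS}$, for either initial store $IS = (\Box)$ or $IS = (\blacksquare)$.
   Context: SYNCSIMPLE: subprocesses $\mathcal{U} ::= \checkmark \mid 0 \mid\ !\mathcal{U} \mid\ ?\mathcal{U}$; processes are finite parallel compositions $\mathcal{U}_1 \mid \cdots \mid \mathcal{U}_n$ (parallel composition is associative, commutative, with $0$ as identity). The only reduction is $!\mathcal{U}_1 \mid ?\mathcal{U}_2 \mid \mathcal{P} \to \mathcal{U}_1 \mid \mathcal{U}_2 \mid \mathcal{P}$. A process is successful if it has the form $\checkmark \mid \mathcal{P}$. $\mathrm{LOCKSIMPLE}_{k,IS}$ (here $k=1$): subprocesses $\mathcal{U} ::= 0 \mid \checkmark \mid P_i\mathcal{U} \mid T_i\mathcal{U}$ ($1\le i\le k$), processes are parallel compositions of subprocesses. Execution acts on states $(\mathcal{P},\mathcal{C})$ with locks $C_i\in\{\Box \text{ (empty)},\blacksquare \text{ (full)}\}$, starting from the initial store $IS$. Rules: $(P_i\mathcal{U}\mid\mathcal{P},\mathcal{C}[C_i=\Box]) \to (\mathcal{U}\mid\mathcal{P},\mathcal{C}[C_i\mapsto\blacksquare])$ (so $P_i$ blocks on a full lock), and $(T_i\mathcal{U}\mid\mathcal{P},\mathcal{C}) \to (\mathcal{U}\mid\mathcal{P},\mathcal{C}[C_i\mapsto\Box])$ (take never blocks). A state is successful if its process contains a top-level $\checkmark$. In both calculi, a process (state) is may-convergent if some reduction sequence reaches a successful process (state), and must-convergent if every process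 (state) reachable from it is may-convergent. A translation is a mapping $\tau$ from SYNCSIMPLE-processes to $\mathrm{LOCKSIMPLE}_{k,IS}$-processes; it is compositional if $\tau(0)=0$, $\tau(\checkmark)=\checkmark$, $\tau(\mathcal{P}_1\mid\mathcal{P}_2)=\tau(\mathcal{P}_1)\mid\tau(\mathcal{P}_2)$, $\tau(\mathcal{U})$ contains no parallel operator, and $\tau(!\mathcal{U})=\tau(!)\tau(\mathcal{U})$, $\tau(?\mathcal{U})=\tau(?)\tau(\mathcal{U})$. It is correct if for every SYNCSIMPLE-process $P$: $P$ is may-convergent iff $\tau(P)$ is, and $P$ is must-convergent iff $\tau(P)$ is. The translations considered in this result are compositional. *)

(* Defs.v *)
From Stdlib Require Import List Permutation Relation_Operators.
Import ListNotations.

Inductive sU : Type :=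
  | STick : sU
  | SZero : sU
  | SSend : sU -> sU
  | SRecv : sU -> sU.

(* processes: finite parallel compositions, represented as lists;
   associativity/commutativity is handled by Permutation in the rules,
   0 is inert. *)
Definition sproc := list sU.

Definition sstep (P Q : sproc) : Prop :=
  exists U1 U2 R,
    Permutation P (SSend U1 :: SRecv U2 :: R) /\ Q = U1 :: U2 :: R.

Definition ssuccessful (P : sproc) : Prop := In STick P.

Definition sreach := clos_refl_trans sproc sstep.

Definition smay (P : sproc) : Prop :=
  exists Q, sreach P Q /\ ssuccessful Q.

Definition smust (P : sproc) : Prop :=
  forall Q, sreach P Q -> smay Q.

(* subprocesses U ::= 0 | ✓ | P_1 U | T_1 U   (k = 1, index omitted) *)
Inductive lU : Type :=
  | LZero : lU
  | LTick : lU
  | LPut  : lU -> lU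
  | LTake : lU -> lU.

Definition lproc := list lU.

(* lock contents: false = empty (□), true = full (■) *)
Definition store := bool.
Definition lstate := (lproc * store)%type.

Inductive lstep : lstate -> lstate -> Prop :=
  | lstep_put : forall P U R,
      Permutation P (LPut U :: R) ->
      lstep (P, false) (U :: R, true)
  | lstep_take : forall P U R c,
      Permutation P (LTake U :: R) ->
      lstep (P, c) (U :: R, false).

Definition lsuccessful (s : lstate) : Prop := In LTick (fst s).

Definition lreach := clos_refl_trans lstate lstep.

Definition lmay (s : lstate) : Prop :=
  exists t, lreach s t /\ lsuccessful t.

Definition lmust (s : lstate) : Prop :=
  forall t, lreach s t -> lmay t.

(* lock actions used to form the prefix τ(!) or τ(?) *)
Inductive lact : Type := APut | ATake.

Definition act_prefix (a : lact) (U : lU) : lU :=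
  match a with APut => LPut U | ATake => LTake U end.

Definition prefix (w : list lact) (U : lU) : lU :=
  fold_right act_prefix U w.

(* It is compositional if it acts componentwise on parallel compositions
   through a subprocess map ts (so τ(U) has no parallel operator),
   with τ(0)=0, τ(✓)=✓, τ(!U)=τ(!)τ(U), τ(?U)=τ(?)τ(U). *)
Definition compositional (tau : sproc -> lproc) : Prop :=
  exists (ts : sU -> lU) (wsend wrecv : list lact),
    ts STick = LTick /\
    ts SZero = LZero /\
    (forall U, ts (SSend U) = prefix wsend (ts U)) /\
    (forall U, ts (SRecv U) = prefix wrecv (ts U)) /\
    (forall P, tau P = map ts P).

Definition correct (IS : store) (tau : sproc -> lproc) : Prop :=
  forall P : sproc,
    (smay P <-> lmay (tau P, IS)) /\ (smust P <-> lmust (tau P, IS)).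

(* Main.v *)
Require Import Defs.
From Stdlib Require Import List Permutation Relation_Operators Operators_Properties Lia.
Import ListNotations.

Lemma lstuck (s t : lstate) : (forall u, ~ lstep s u) -> lreach s t -> t = s.
Proof.
  intros Hs H. apply clos_rt_rt1n_iff in H. destruct H as [|y z Hy _]; auto.
  exfalso; exact (Hs _ Hy).
Qed.

Lemma sstuck (s t : sproc) : (forall u, ~ sstep s u) -> sreach s t -> t = s.
Proof.
  intros Hs H. apply clos_rt_rt1n_iff in H. destruct H as [|y z Hy _]; auto.
  exfalso; exact (Hs _ Hy).
Qed.

Fixpoint exec (w : list lact) (c : bool) : list lact * bool :=
  match w with
  | [] => ([], c)
  | ATake :: w' => exec w' false
  | APut :: w' => if c then (w, true) else exec w' true
  end.

Lemma exec_reach : forall w c U R,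
  lreach (prefix w U :: R, c) (prefix (fst (exec w c)) U :: R, snd (exec w c)).
Proof.
  induction w as [|a w IH]; intros c U R; simpl.
  - apply rt_refl.
  - destruct a; simpl.
    + destruct c; simpl.
      * apply rt_refl.
      * eapply rt_trans; [apply rt_step|apply IH].
        apply lstep_put. apply Permutation_refl.
    + eapply rt_trans; [apply rt_step|apply IH].
      apply lstep_take. apply Permutation_refl.
Qed.

Lemma exec_blocked : forall w c,
  fst (exec w c) = [] \/ exists r, fst (exec w c) = APut :: r /\ snd (exec w c) = true.
Proof.
  induction w as [|a w IH]; intros c; simpl; auto.
  destruct a; auto. destruct c; simpl; eauto.
Qed.

Lemma helpers : forall w U V c k R, length w <= k ->
  exists R' c', lreach (prefix w U :: repeat (LTake V) k ++ R, c) (U :: R', c').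
Proof.
  induction w as [|a w IH]; intros U V c k R Hk; simpl.
  - eexists _, _; apply rt_refl.
  - simpl in Hk. destruct a; simpl.
    + destruct k as [|k]; [lia|]. destruct c.
      *
        destruct (IH U V true k (V :: R)) as [R' [c' H]]; [lia|].
        exists R', c'.
        eapply rt_trans; [apply rt_step|].
        { apply (lstep_take _ V (LPut (prefix w U) :: repeat (LTake V) k ++ R)).
          simpl. apply perm_swap. }
        eapply rt_trans; [apply rt_step|exact H].
        apply lstep_put.
        eapply perm_trans; [apply perm_swap|]. apply perm_skip.
        apply Permutation_middle.
      * destruct (IH U V true (S k) R) as [R' [c' H]]; [lia|].
        exists R', c'.
        eapply rt_trans; [apply rt_step|exact H].
        apply lstep_put. apply Permutation_refl.
    + destruct (IH U V false k R) as [R' [c' H]]; [lia|].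
      exists R', c'.
      eapply rt_trans; [apply rt_step|exact H].
      apply lstep_take. apply Permutation_refl.
Qed.

Lemma no_recv_stuck : forall P, (forall U, ~ In (SRecv U) P) -> forall u, ~ sstep P u.
Proof.
  intros P HP u [U1 [U2 [R [Hp _]]]].
  apply (HP U2). apply Permutation_sym in Hp.
  apply (Permutation_in _ Hp). simpl; auto.
Qed.


Definition P0 := [SRecv SZero; SSend STick].

Lemma sstep_inv : forall x y, sstep x y -> (x = P0 \/ In STick x) -> (y = P0 \/ In STick y).
Proof.
  intros x y [U1 [U2 [R [Hp Hy]]]] [Hx|Hx]; subst y; right.
  - subst x.
    assert (Hin : In (SSend U1) P0).
    { apply Permutation_sym in Hp. apply (Permutation_in _ Hp). simpl; auto. }
    simpl in Hin. destruct Hin as [H|[H|[]]]; try discriminate.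
    injection H as <-. simpl; auto.
  - apply (Permutation_in _ Hp) in Hx. simpl in Hx.
    destruct Hx as [H|[H|H]]; try discriminate. simpl; auto.
Qed.

Lemma sreach_inv : forall x y, sreach x y -> (x = P0 \/ In STick x) -> (y = P0 \/ In STick y).
Proof.
  intros x y H. induction H; eauto using sstep_inv.
Qed.

Lemma smust_P0 : smust P0.
Proof.
  intros Q HQ. destruct (sreach_inv _ _ HQ (or_introl eq_refl)) as [->|H].
  - exists [STick; SZero]. split.
    + apply rt_step. exists STick, SZero, []. split; auto. unfold P0; apply perm_swap.
    + unfold ssuccessful; simpl; auto.
  - exists Q. split; auto. apply rt_refl.
Qed.

Lemma single_stuck : forall U u, ~ sstep [U] u.
Proof.
  intros U u [U1 [U2 [R [Hp _]]]]. apply Permutation_length in Hp. simpl in Hp. discriminate.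
Qed.

Lemma two_put_stuck : forall a b u, ~ lstep ([LPut a; LPut b], true) u.
Proof.
  intros a b u H. inversion H; subst.
  match goal with Hp : Permutation _ (LTake _ :: _) |- _ => apply Permutation_sym in Hp; assert (Hin := Permutation_in _ Hp (in_eq _ _)) end.
  simpl in Hin. destruct Hin as [Hx|[Hx|[]]]; discriminate.
Qed.

Theorem theorem3p2 :
  forall IS : store,
    ~ (exists tau : sproc -> lproc, compositional tau /\ correct IS tau).
Proof.
  intros IS [tau [[ts [ws [wr [Htick [Hzero [Hsend [Hrecv Htau]]]]]]] Hcor]].
  assert (Hws : ws = [] \/ exists ws', ws = ATake :: ws').
  { destruct ws as [|a ws']; auto. destruct a; eauto. exfalso.
    destruct (exec_blocked wr IS) as [Hr | [r [Hr Hc]]].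
    - destruct (Hcor [SRecv STick]) as [[_ Hm] _].
      assert (Hs : smay [SRecv STick]).
      { apply Hm. rewrite Htau. simpl. rewrite Hrecv, Htick.
        exists ([prefix (fst (exec wr IS)) LTick], snd (exec wr IS)).
        split. apply exec_reach. rewrite Hr. unfold lsuccessful; simpl; auto. }
      destruct Hs as [Q [HQ HT]].
      apply sstuck in HQ; [|apply single_stuck]. subst Q.
      simpl in HT. destruct HT as [H|[]]; discriminate.
    - destruct (Hcor P0) as [_ [Hm _]].
      specialize (Hm smust_P0).
      rewrite Htau in Hm. unfold P0 in Hm. simpl in Hm.
      rewrite Hrecv, Hsend, Hzero, Htick in Hm.
      assert (Hreach := exec_reach wr IS LZero [prefix (APut :: ws') LTick]).
      rewrite Hr, Hc in Hreach. specialize (Hm _ Hreach).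
      destruct Hm as [t [Ht Hsucc]].
      apply lstuck in Ht; [|apply two_put_stuck]. subst t.
      simpl in Hsucc. destruct Hsucc as [H|[H|[]]]; discriminate. }
  set (k := length ws).
  destruct (Hcor (SSend STick :: repeat (SSend SZero) k)) as [[_ Hm] _].
  assert (Hnot : ~ smay (SSend STick :: repeat (SSend SZero) k)).
  { intros [Q [HQ HT]]. apply sstuck in HQ.
    - subst Q. simpl in HT. destruct HT as [H|H]; [discriminate|].
      apply repeat_spec in H. discriminate.
    - apply no_recv_stuck. intros U [H|H]; [discriminate|].
      apply repeat_spec in H. discriminate. }
  apply Hnot, Hm. rewrite Htau. simpl. rewrite Hsend, Htick, map_repeat, Hsend, Hzero.
  destruct Hws as [Hw | [ws' Hw]].
  - subst ws. simpl. exists ([LTick] ++ repeat LZero k, IS). split.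
    + apply rt_refl.
    + unfold lsuccessful; simpl; auto.
  - destruct (helpers ws LTick (prefix ws' LZero) IS k [] (le_n _)) as [R' [c' H]].
    exists (LTick :: R', c'). split.
    + rewrite app_nil_r in H. rewrite Hw in H |- *. exact H.
    + unfold lsuccessful; simpl; auto.
Qed.
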